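(* Let $a,b\in\mathbb{Q}$ be such that $f(x)=x^{12}+ax^6+b$ is irreducible over $\mathbb{Q}$. Let $G_4$ be the Galois group of $x^4+ax^2+b$ and $G_6$ the Galois group of $x^6+ax^3+b$ over $\mathbb{Q}$. Then $(G_4,G_6)\notin\{(4T1,6T1),(4T1,6T2),(4T1,6T5)\}$.
   Context: Galois groups are regarded as transitive permutation groups on the roots up to conjugacy; $nTj$ denotes the $j$-th conjugacy class of transitive subgroups of $S_n$ in the Butler–McKay numbering (so $4T1=C_4$, $6T1=C_6$, $6T2=S_3$ acting regularly, $6T5=C_3\times S_3$). *)

(* Defs.v *)
From HB Require Import structures.
From mathcomp Require Import all_boot all_order all_algebra all_fingroup all_solvable all_field.
Set Implicit Arguments. Unset Strict Implicit. Unset Printing Implicit Defensive.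
Import GRing.Theory.
Local Open Scope ring_scope.

(* The permutation s : 'S_n.+1 of {0,..,n} given by the list l of images
   (i |-> l`_i); the identity if l does not describe a permutation. *)
Definition lperm (n : nat) (l : seq nat) : 'S_n.+1 :=
  insubd (1%g : 'S_n.+1) [ffun i : 'I_n.+1 => (inord (nth 0%N l i) : 'I_n.+1)].

(* Galois group of E/Q, viewed as a permutation group on the labelled roots rs:
   the set of permutations s such that some g in Gal(E/Q) maps rs_i to rs_(s i). *)
Definition galPerm (L : splittingFieldType rat) (E : {subfield L}) (n : nat)
    (rs : n.-tuple L) : {set 'S_n} :=
  [set s : 'S_n | [exists g in ('Gal(E / 1%VS))%g,
                    [forall i : 'I_n, g (tnth rs i) == tnth rs (s i)]]].

Definition conjS (n : nat) (G T : {set 'S_n}) : Prop :=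
  exists x : 'S_n, (G :^ x)%g = T.

(* Representatives (points labelled 0..n-1) of the Butler-McKay classes. *)
Definition T4_1 : {set 'S_4} := <[lperm 3 [:: 1; 2; 3; 0]%N]>%g.
Definition T6_1 : {set 'S_6} := <[lperm 5 [:: 1; 2; 3; 4; 5; 0]%N]>%g.
(* 6T2 = S3 regular : <(0 2 4)(1 5 3), (0 1)(2 3)(4 5)> *)
Definition T6_2 : {set 'S_6} :=
  <<[set lperm 5 [:: 2; 5; 4; 1; 0; 3]%N; lperm 5 [:: 1; 0; 3; 2; 5; 4]%N]>>%g.
(* 6T5 = C3 x S3 = 3 wr 2 : <(0 2 4), (1 3 5), (0 1)(2 3)(4 5)> *)
Definition T6_5 : {set 'S_6} :=
  <<[set lperm 5 [:: 2; 1; 4; 3; 0; 5]%N; lperm 5 [:: 0; 3; 2; 5; 4; 1]%N;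
         lperm 5 [:: 1; 0; 3; 2; 5; 4]%N]>>%g.

Definition roots_of (L : splittingFieldType rat) (p : {poly rat}) (n : nat)
    (rs : n.-tuple L) : Prop :=
  uniq rs /\ map_poly (in_alg L) p = \prod_(z <- rs) ('X - z%:P).

(* Main.v *)
Require Import Defs.
From HB Require Import structures.
From mathcomp Require Import all_boot all_order all_algebra all_fingroup all_solvable all_field.
From mathcomp Require Import ring lra.
Import GRing.Theory Num.Theory.
Local Open Scope ring_scope.
Set Implicit Arguments. Unset Strict Implicit. Unset Printing Implicit Defensive.

Section Gr.
Variable n : nat.
Definition gr (s : 'S_n.+1) : seq nat :=
  map (fun i => nat_of_ord (s (inord i))) (iota 0 n.+1).
Definition comp (l1 l2 : seq nat) : seq nat := map (fun i => nth 0%N l2 i) l1.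

Lemma nth_gr (s : 'S_n.+1) (i : 'I_n.+1) : nth 0%N (gr s) i = s i.
Proof. by rewrite /gr (nth_map 0%N) ?size_iota // nth_iota // add0n inord_val. Qed.

Lemma size_gr s : size (gr s) = n.+1.
Proof. by rewrite size_map size_iota. Qed.

Lemma gr_inj s t : gr s = gr t -> s = t.
Proof. by move=> h; apply/permP => i; apply/val_inj; rewrite /= -!nth_gr h. Qed.

Lemma grM s t : gr (s * t)%g = comp (gr s) (gr t).
Proof.
rewrite /gr /comp -map_comp; apply/eq_in_map => i; rewrite mem_iota => /andP[_ hi].
by rewrite /= permM nth_gr.
Qed.

Lemma gr1 : gr 1%g = iota 0 n.+1.
Proof.
rewrite /gr -{2}(map_id (iota 0 n.+1)); apply/eq_in_map => i.
by rewrite mem_iota => /andP[_ hi]; rewrite perm1 inordK.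
Qed.

Lemma gr_lperm l : size l = n.+1 -> uniq l -> all (fun k => k < n.+1)%N l ->
  gr (lperm n l) = l.
Proof.
move=> hs hu ha.
have hinj : injectiveb [ffun i : 'I_n.+1 => (inord (nth 0%N l i) : 'I_n.+1)].
  apply/injectiveP => i j; rewrite !ffunE => /(congr1 val).
  have hl k : (k < n.+1)%N -> (nth 0%N l k < n.+1)%N.
    by move=> hk; apply: (allP ha); rewrite mem_nth ?hs.
  rewrite /= !inordK ?hl //; move/eqP; rewrite nth_uniq ?hs // => /eqP; apply: val_inj.
rewrite /gr /lperm -{2}(mkseq_nth 0%N l) hs /mkseq; apply/eq_in_map => i.
rewrite mem_iota => /andP[_ hi].
have hii : ((inord i : 'I_n.+1) : nat) = i by rewrite inordK.
rewrite -pvalE insubdK // ffunE inordK hii //.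
by apply: (allP ha); rewrite mem_nth ?hs.
Qed.

Definition Sset (Ls : seq (seq nat)) : {set 'S_n.+1} := [set s | gr s \in Ls].

Lemma Sset_group Ls : iota 0 n.+1 \in Ls ->
  all (fun l1 => all (fun l2 => comp l1 l2 \in Ls) Ls) Ls -> group_set (Sset Ls).
Proof.
move=> h1 hM; apply/group_setP; split; first by rewrite inE gr1.
move=> s t; rewrite !inE grM => hs ht.
by move/allP: hM => /(_ _ hs) /allP /(_ _ ht).
Qed.

End Gr.

Section GP.
Local Open Scope group_scope.
Definition Pq {gT : finGroupType} (G : {set gT}) : Prop :=
  exists N : {set gT},
    (forall x, x \in G -> x \in N -> exists2 k, k \in G & x = (k * k)%g) /\
    (forall g h, g \in G -> h \in G ->
       g \in N \/ h \in N \/ exists2 m, m \in G & (m \in N /\ h = (g * m)%g)).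

Lemma Pq_conj (gT : finGroupType) (G : {set gT}) x : Pq (G :^ x) -> Pq G.
Proof.
case=> N [hsq hpair]; exists (N :^ x^-1)%g; split.
  move=> y yG; rewrite mem_conjgV => yN.
  have [k kG hk] := hsq _ (etrans (memJ_conjg G x y) yG) yN.
  exists (k ^ x^-1)%g; first by rewrite -mem_conjg.
  by rewrite -conjMg -hk conjgK.
move=> g h gG hG; rewrite !mem_conjgV.
case: (hpair _ _ (etrans (memJ_conjg G x g) gG) (etrans (memJ_conjg G x h) hG)) => [->|[->|[m mG [mN hm]]]];
  [by left | by right; left | right; right].
exists (m ^ x^-1)%g; first by rewrite -mem_conjg.
by rewrite mem_conjgV conjgKV; split => //; rewrite -(conjgK x g) -conjMg -hm conjgK.
Qed.

Lemma Pq_gen n (T : {set 'S_n.+1}) (Ls LN : seq (seq nat)) :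
  group_set T ->
  T \subset Sset n Ls ->
  all (fun l1 => all (fun l3 => [|| l1 \in LN, comp l1 l3 \in LN | l3 \in LN]) Ls) Ls ->
  (forall x, x \in T -> gr x \in LN -> exists2 k, k \in T & x = (k * k)%g) ->
  Pq T.
Proof.
move=> gT sT hall hsq; pose TG := Group gT.
exists (Sset n LN); split; first by move=> x xT; rewrite inE; apply: hsq.
move=> g h gT' hT'.
have mT : (g^-1 * h)%g \in T by rewrite -[T]/(TG : {set _}) groupM ?groupV.
have hm : h = (g * (g^-1 * h))%g by rewrite mulKVg.
have g1 : gr g \in Ls by have := subsetP sT _ gT'; rewrite inE.
have g3 : gr (g^-1 * h)%g \in Ls by have := subsetP sT _ mT; rewrite inE.
move/allP: hall => /(_ _ g1) /allP /(_ _ g3).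
rewrite -grM -hm !inE => /or3P[->|->|h3]; [by left | by right; left|].
by right; right; exists (g^-1 * h)%g; rewrite // inE.
Qed.

End GP.

Definition L41 : seq (seq nat) := [:: [:: 0; 1; 2; 3]; [:: 1; 2; 3; 0]; [:: 2; 3; 0; 1]; [:: 3; 0; 1; 2]]%N.
Definition N41 : seq (seq nat) := [:: [:: 0; 1; 2; 3]; [:: 2; 3; 0; 1]]%N.
Definition L61 : seq (seq nat) := [:: [:: 0; 1; 2; 3; 4; 5]; [:: 1; 2; 3; 4; 5; 0]; [:: 2; 3; 4; 5; 0; 1]; [:: 3; 4; 5; 0; 1; 2]; [:: 4; 5; 0; 1; 2; 3]; [:: 5; 0; 1; 2; 3; 4]]%N.
Definition N61 : seq (seq nat) := [:: [:: 0; 1; 2; 3; 4; 5]; [:: 2; 3; 4; 5; 0; 1]; [:: 4; 5; 0; 1; 2; 3]]%N.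
Definition L62 : seq (seq nat) := [:: [:: 0; 1; 2; 3; 4; 5]; [:: 1; 0; 3; 2; 5; 4]; [:: 2; 5; 4; 1; 0; 3]; [:: 3; 4; 5; 0; 1; 2]; [:: 4; 3; 0; 5; 2; 1]; [:: 5; 2; 1; 4; 3; 0]]%N.
Definition N62 : seq (seq nat) := [:: [:: 0; 1; 2; 3; 4; 5]; [:: 2; 5; 4; 1; 0; 3]; [:: 4; 3; 0; 5; 2; 1]]%N.
Definition L65 : seq (seq nat) := [:: [:: 0; 1; 2; 3; 4; 5]; [:: 0; 3; 2; 5; 4; 1]; [:: 0; 5; 2; 1; 4; 3]; [:: 1; 0; 3; 2; 5; 4]; [:: 1; 2; 3; 4; 5; 0]; [:: 1; 4; 3; 0; 5; 2]; [:: 2; 1; 4; 3; 0; 5]; [:: 2; 3; 4; 5; 0; 1]; [:: 2; 5; 4; 1; 0; 3]; [:: 3; 0; 5; 2; 1; 4]; [:: 3; 2; 5; 4; 1; 0]; [:: 3; 4; 5; 0; 1; 2]; [:: 4; 1; 0; 3; 2; 5]; [:: 4; 3; 0; 5; 2; 1]; [:: 4; 5; 0; 1; 2; 3]; [:: 5; 0; 1; 2; 3; 4]; [:: 5; 2; 1; 4; 3; 0]; [:: 5; 4; 1; 0; 3; 2]]%N.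
Definition N65 : seq (seq nat) := [:: [:: 0; 1; 2; 3; 4; 5]; [:: 0; 3; 2; 5; 4; 1]; [:: 0; 5; 2; 1; 4; 3]; [:: 2; 1; 4; 3; 0; 5]; [:: 2; 3; 4; 5; 0; 1]; [:: 2; 5; 4; 1; 0; 3]; [:: 4; 1; 0; 3; 2; 5]; [:: 4; 3; 0; 5; 2; 1]; [:: 4; 5; 0; 1; 2; 3]]%N.

Lemma Pq_cube n (T : {group 'S_n.+1}) (Ls LN : seq (seq nat)) :
  T \subset Sset n Ls ->
  all (fun l1 => all (fun l3 => [|| l1 \in LN, comp l1 l3 \in LN | l3 \in LN]) Ls) Ls ->
  all (fun l => l == comp (comp l l) (comp l l)) LN ->
  Pq (T : {set _}).
Proof.
move=> sT hall hc; apply: (Pq_gen (groupP T) sT hall) => x xT xN.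
exists (x * x)%g; first by rewrite groupM.
apply: gr_inj; rewrite !grM.
by move/allP: hc => /(_ _ xN) /eqP.
Qed.

Lemma sub_gen_Sset n (A : {set 'S_n.+1}) Ls (h1 : iota 0 n.+1 \in Ls)
  (hM : all (fun l1 => all (fun l2 => comp l1 l2 \in Ls) Ls) Ls) :
  A \subset Sset n Ls -> (<<A>>)%g \subset Sset n Ls.
Proof. by move=> hA; rewrite -[Sset n Ls]/(Group (Sset_group h1 hM) : {set _}) gen_subG. Qed.

Lemma Pq65 : Pq T6_5.
Proof.
have sT : T6_5 \subset Sset 5 L65.
  apply: sub_gen_Sset => //.
  apply/subsetP => x hx; rewrite inE; move: hx.
  by rewrite !inE => /orP[/orP[]|] /eqP->; rewrite gr_lperm.
by apply: (Pq_cube (T := <<_>>%G) (LN := N65) sT); vm_compute.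
Qed.

Lemma Pq62 : Pq T6_2.
Proof.
have sT : T6_2 \subset Sset 5 L62.
  apply: sub_gen_Sset => //.
  apply/subsetP => x hx; rewrite inE; move: hx.
  by rewrite !inE => /orP[] /eqP->; rewrite gr_lperm.
by apply: (Pq_cube (T := <<_>>%G) (LN := N62) sT); vm_compute.
Qed.

Lemma sub_cyc_Sset n (x : 'S_n.+1) Ls (h1 : iota 0 n.+1 \in Ls)
  (hM : all (fun l1 => all (fun l2 => comp l1 l2 \in Ls) Ls) Ls) :
  gr x \in Ls -> (<[x]>)%g \subset Sset n Ls.
Proof.
move=> hA; rewrite -[Sset n Ls]/(Group (Sset_group h1 hM) : {set _}) cycle_subG.
by rewrite inE.
Qed.

Lemma Pq61 : Pq T6_1.
Proof.
have sT : T6_1 \subset Sset 5 L61 by apply: sub_cyc_Sset; rewrite ?gr_lperm.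
by apply: (Pq_cube (T := <[_]>%G) (LN := N61) sT); vm_compute.
Qed.

Definition x41 := lperm 3 [:: 1; 2; 3; 0]%N.

Lemma Pq41 : Pq T4_1.
Proof.
have sT : T4_1 \subset Sset 3 L41 by apply: sub_cyc_Sset; rewrite ?gr_lperm.
apply: (Pq_gen (groupP <[x41]>%G) sT (LN := N41)); first by vm_compute.
move=> x xT; rewrite !inE => /orP[] /eqP hx.
  exists 1%g; first exact: group1.
  by rewrite mulg1; apply: gr_inj; rewrite hx gr1.
exists x41; first exact: cycle_id.
by apply: gr_inj; rewrite hx grM /x41 gr_lperm.
Qed.

Lemma T41_nonexp2 : exists2 g, g \in T4_1 & (g * g)%g != 1%g.
Proof.
exists x41; first exact: cycle_id.
apply/eqP => /(congr1 (@gr 3)); rewrite grM gr1 /x41 gr_lperm //.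
Qed.

Section Gal.
Variables (L : splittingFieldType rat) (E : {subfield L}) (n : nat)
  (rs : n.+1.-tuple L) (p : {poly rat}).
Hypothesis Hsplit : splittingFieldFor 1%VS (map_poly (in_alg L) p) E.
Hypothesis Hroots : roots_of p rs.

Let pL := map_poly (in_alg L) p.

Lemma uniq_rs : uniq rs. Proof. by case: Hroots. Qed.
Lemma pL_prod : pL = \prod_(z <- rs) ('X - z%:P). Proof. by case: Hroots. Qed.

Lemma root_pL x : root pL x = (x \in rs).
Proof. by rewrite pL_prod root_prod_XsubC. Qed.

Lemma rs_inE i : tnth rs i \in E.
Proof.
case: Hsplit => rs' Dp <-; apply: seqv_sub_adjoin.
by rewrite -root_prod_XsubC -(eqp_root Dp) root_pL mem_tnth.
Qed.

Lemma galois1E : galois 1%VS E.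
Proof.
apply/splitting_galoisField; exists pL; split => //.
  by apply/polyOver1P; exists p.
by rewrite pL_prod separable_prod_XsubC uniq_rs.
Qed.

Lemma fixed1 x : x \in E -> (forall s, s \in 'Gal(E / 1%VS)%g -> s x = x) -> x \in 1%VS.
Proof.
move=> xE h; have <- := galois_fixedField galois1E.
by apply/fixedFieldP.
Qed.

Lemma gal_root (s : gal_of E) x : s \in 'Gal(E / 1%VS)%g -> x \in rs -> s x \in rs.
Proof.
move=> sG xr; rewrite -root_pL; apply/rootP.
have hp : map_poly s pL = pL.
  apply: (fixedPoly_gal (sub1v _) sG); by apply/polyOver1P; exists p.
by rewrite -hp horner_map /=; move: xr; rewrite -root_pL => /rootP ->; rewrite rmorph0.
Qed.

Definition wit (s : gal_of E) (g : 'S_n.+1) :=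
  s \in 'Gal(E / 1%VS)%g /\ forall i, s (tnth rs i) = tnth rs (g i).

Lemma tnth_inj : injective (tnth rs).
Proof.
move=> i j; rewrite !(tnth_nth 0) => /eqP; rewrite nth_uniq ?size_tuple ?uniq_rs //.
by move/eqP/val_inj.
Qed.

Lemma wit_mul s t g h : wit s g -> wit t h -> wit (s * t)%g (g * h)%g.
Proof.
move=> [sG hs] [tG ht]; split; first by rewrite groupM.
by move=> i; rewrite galM ?rs_inE // hs ht permM.
Qed.

Lemma wit_eq s t g : wit s g -> wit t g -> s = t.
Proof.
move=> [sG hs] [tG ht].
pose r := (s * t^-1)%g.
have rfix : forall i, r (tnth rs i) = tnth rs i.
  move=> i; rewrite /r galM ?rs_inE // hs -ht -galM ?rs_inE // mulgV gal_id //.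
have sub : (E <= fixedField [set r])%VS.
  case: Hsplit => rs' Dp defE.
  suff h : (<<1%VS & rs'>> <= fixedField [set r])%VS by rewrite defE in h.
  apply/Fadjoin_seqP; split; first exact: sub1v.
  move=> x xr'.
  have : x \in rs by rewrite -root_pL (eqp_root Dp) root_prod_XsubC.
  case/tnthP => i ->; apply/fixedFieldP; first exact: rs_inE.
  by move=> y; rewrite inE => /eqP ->.
apply/eqP/gal_eqP => x xE.
have /mem_fixedFieldP[_ /(_ r)] := subvP sub x xE.
rewrite inE eqxx => /(_ isT) hx.
by rewrite -{1}(mulgKV t s) galM // -/r hx.
Qed.

Lemma wit_exists s : s \in 'Gal(E / 1%VS)%g -> exists g, wit s g.
Proof.
move=> sG.
pose f := fun i : 'I_n.+1 => (inord (index (s (tnth rs i)) rs) : 'I_n.+1).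
have hf i : tnth rs (f i) = s (tnth rs i).
  have hin : s (tnth rs i) \in rs by apply: gal_root => //; apply: mem_tnth.
  rewrite (tnth_nth 0) /f inordK ?nth_index //.
  by have := index_mem (s (tnth rs i)) rs; rewrite size_tuple hin.
have finj : injective f.
  move=> i j hij; apply: tnth_inj; have := congr1 (tnth rs) hij; rewrite !hf.
  exact: fmorph_inj.
exists (perm finj); split => // i; by rewrite permE hf.
Qed.

Lemma galPermP g : reflect (exists s, wit s g) (g \in galPerm E rs).
Proof.
rewrite inE; apply: (iffP existsP) => [[s /andP[sG /forallP h]]|[s [sG h]]].
  by exists s; split => // i; apply/eqP.
by exists s; rewrite sG; apply/forallP => i; rewrite h.
Qed.


Lemma galc (t : gal_of E) (r : rat) : t r%:A = r%:A.
Proof. by rewrite linearZ /= rmorph1. Qed.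

Lemma galMul (s : gal_of E) (x y : L) : s (x * y) = s x * s y.
Proof. exact: rmorphM. Qed.
Lemma galN (s : gal_of E) (x : L) : s (- x) = - s x.
Proof. exact: raddfN. Qed.

Lemma gal_sq_pm (s : gal_of E) u (c : rat) : u ^+ 2 = c%:A -> s u = u \/ s u = - u.
Proof.
move=> hu.
have hs : s u ^+ 2 = u ^+ 2 by have := galc s c; rewrite -hu rmorphXn => ->.
have h : (s u - u) * (s u + u) = 0 by rewrite -subr_sqr hs subrr.
move/eqP: h; rewrite mulf_eq0 subr_eq0 addr_eq0 => /orP[/eqP|/eqP]; by [left|right].
Qed.

Lemma gal_sq_fix (t : gal_of E) u (c : rat) : u \in E -> u ^+ 2 = c%:A -> (t * t)%g u = u.
Proof.
move=> uE hu; rewrite galM //.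
case: (gal_sq_pm t hu) => h1.
  exact: (etrans (congr1 (fun x => t x) h1) h1).
have h2 : t (- u) = - t u by rewrite raddfN.
exact: (etrans (congr1 (fun x => t x) h1) (etrans h2 (etrans (congr1 -%R h1) (opprK u)))).
Qed.

Lemma nonfix u : u \in E -> u \notin 1%VS -> exists2 s, s \in 'Gal(E / 1%VS)%g & s u != u.
Proof.
move=> uE u1.
case: (boolP [exists s in 'Gal(E / 1%VS)%g, s u != u]) => [/exists_inP[s sG hs]|hn].
  by exists s.
exfalso; move/negP: u1; apply; apply: fixed1 => // s sG; apply/eqP.
by move/exists_inPn: hn => /(_ s sG); rewrite negbK.
Qed.

Lemma quad_uniq u v (c d : rat) :
  Pq (galPerm E rs) -> u \in E -> v \in E -> u ^+ 2 = c%:A -> v ^+ 2 = d%:A ->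
  u \notin 1%VS -> v \notin 1%VS -> u * v \in 1%VS.
Proof.
move=> [N [hsq hpair]] uE vE hu hv u1 v1.
have inNfix s g w (e : rat) : wit s g -> g \in N -> w \in E -> w ^+ 2 = e%:A -> s w = w.
  move=> ws gN wE hw.
  have gG : g \in galPerm E rs by apply/galPermP; exists s.
  have [k kG hk] := hsq g gG gN.
  have [t wt] := galPermP _ kG.
  have := wit_mul wt wt; rewrite -hk => wt2.
  by rewrite (wit_eq ws wt2); apply: gal_sq_fix hw.
have pairP s g t h : wit s g -> wit t h ->
   g \in N \/ h \in N \/ exists r, exists2 m, wit r m /\ m \in N & t = (s * r)%g.
  move=> ws wt.
  have gG : g \in galPerm E rs by apply/galPermP; exists s.
  have hG : h \in galPerm E rs by apply/galPermP; exists t.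
  case: (hpair g h gG hG) => [|[|[m mG [mN hm]]]]; [by left| by right; left|right; right].
  have [r wr] := galPermP _ mG.
  exists r, m => //; apply: (wit_eq wt); rewrite hm; exact: wit_mul.
have nz (w : L) : w \notin 1%VS -> w != - w.
  move=> w1; apply: contra w1 => /eqP hw.
  have : w *+ 2 = 0 by rewrite mulr2n {1}hw addNr.
  have two : (2%:R : L) != 0 by rewrite -(rmorph_nat (in_alg L)) fmorph_eq0.
  by move/eqP; rewrite -mulr_natl mulf_eq0 (negbTE two) /= => /eqP ->; rewrite mem0v.
have [a aG au] := nonfix uE u1.
have [b bG bv] := nonfix vE v1.
have [g wa] := wit_exists aG.
have [h wb] := wit_exists bG.
have au' : a u = - u by case: (gal_sq_pm a hu) => // h1; rewrite h1 eqxx in au.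
have bv' : b v = - v by case: (gal_sq_pm b hv) => // h1; rewrite h1 eqxx in bv.
have gN : g \notin N by apply/negP => gN; rewrite (inNfix _ _ _ _ wa gN uE hu) eqxx in au.
have hN : h \notin N by apply/negP => hN; rewrite (inNfix _ _ _ _ wb hN vE hv) eqxx in bv.
have av' : a v = - v.
  case: (pairP _ _ _ _ wa wb) => [|[|[r [m [wr mN] hb]]]]; rewrite ?(negbTE gN) ?(negbTE hN) //.
  case: (gal_sq_pm a hv) => // h1.
  move: bv'; rewrite hb galM // h1 (inNfix _ _ _ _ wr mN vE hv) => h2.
  by move: (nz _ v1); rewrite -h2 eqxx.
apply: fixed1; first by rewrite rpredM.
move=> s sG; have [k ws] := wit_exists sG.
case: (pairP _ _ _ _ wa ws) => [|[kN|[r [m [wr mN] hs]]]]; first by rewrite (negbTE gN).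
  by rewrite galMul (inNfix _ _ _ _ ws kN uE hu) (inNfix _ _ _ _ ws kN vE hv).
rewrite hs galMul !galM // au' av' !galN.
by rewrite (inNfix _ _ _ _ wr mN uE hu) (inNfix _ _ _ _ wr mN vE hv) mulrNN.
Qed.

Lemma nonexp2 : (exists2 g, g \in galPerm E rs & (g * g)%g != 1%g) ->
  exists s, s \in 'Gal(E / 1%VS)%g /\ exists i, s (s (tnth rs i)) != tnth rs i.
Proof.
case=> g gG g1; have [s [sG hs]] := galPermP _ gG.
exists s; split => //; apply/existsP; apply: contraR g1 => /existsPn h.
apply/eqP/permP => i; rewrite perm1 permM; apply: tnth_inj.
by have := h i; rewrite negbK hs hs => /eqP.
Qed.

End Gal.

Lemma dvd_root (R : idomainType) (rs : seq R) q :
  q %| \prod_(z <- rs) ('X - z%:P) -> (1 < size q)%N -> exists2 x, x \in rs & root q x.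
Proof.
move=> hd hs; have [m hm] := dvdp_prod_XsubC hd.
case e: (mask m rs) hm => [|x t] hm.
  by move: hs; rewrite (eqp_size hm) big_nil size_poly1.
exists x; first by apply: (mem_mask (m := m)); rewrite e mem_head.
by rewrite (eqp_root hm) root_prod_XsubC mem_head.
Qed.

Lemma ev (L : fieldExtType rat) (a b : rat) (n m : nat) (x : L) :
  (map_poly (in_alg L) ('X^n + a *: 'X^m + b%:P)).[x] = x ^+ n + a%:A * x ^+ m + b%:A.
Proof. by rewrite !rmorphD /= map_polyZ !map_polyXn map_polyC /= !hornerE. Qed.

Lemma inalg_inj (L : fieldExtType rat) (r s : rat) : (r%:A : L) = s%:A -> r = s.
Proof. exact: (fmorph_inj (in_alg L)). Qed.

Lemma inalgX (L : fieldExtType rat) (r : rat) n : (r%:A : L) ^+ n = (r ^+ n)%:A.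
Proof. by change ((in_alg L r) ^+ n = in_alg L (r ^+ n)); rewrite rmorphXn. Qed.
Lemma inalgM (L : fieldExtType rat) (r s : rat) : (r%:A : L) * s%:A = (r * s)%:A.
Proof. by change ((in_alg L r) * in_alg L s = in_alg L (r * s)); rewrite rmorphM. Qed.

Lemma mem1P (L : fieldExtType rat) (x : L) : x \in 1%VS -> exists r : rat, x = r%:A.
Proof. by move/vlineP. Qed.

Lemma d_nonsq (a b : rat) :
  irreducible_poly ('X^12 + a *: 'X^6 + b%:P : {poly rat}) ->
  forall r : rat, r ^+ 2 != a ^+ 2 - 4 * b.
Proof.
move=> [_ hirr] r; apply/eqP => hr.
pose y := (r - a) / 2.
have hb : b = (a ^+ 2 - r ^+ 2) / 4 by rewrite hr; field.
have hy : y ^+ 2 + a * y + b = 0 by rewrite hb /y; field.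
have hf : ('X^12 + a *: 'X^6 + b%:P : {poly rat}) =
          ('X^6 - y%:P) * ('X^6 - (- (a + y))%:P).
  have -> : b%:P = - ((y%:P) ^+ 2 + a%:P * y%:P).
    by rewrite -rmorphXn -!rmorphM -rmorphD -rmorphN; congr (_%:P); rewrite -(subr0 b) -hy; ring.
  rewrite -mul_polyC rmorphN rmorphD /= (_ : 'X^12 = 'X^6 * 'X^6); last by rewrite -exprD.
  ring.
have s7 : size ('X^6 - y%:P : {poly rat}) = 7 by rewrite size_XnsubC.
have s7' : size ('X^6 - (- (a + y))%:P : {poly rat}) = 7 by rewrite size_XnsubC.
have := hirr ('X^6 - y%:P); rewrite s7 hf dvdp_mulIl => /(_ isT isT) /eqp_size.
rewrite size_mul ?s7 ?s7' //; by rewrite -size_poly_eq0 ?s7 ?s7'.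
Qed.

Lemma part6 (a b : rat) (L : splittingFieldType rat) (E : {subfield L}) (rs : 6.-tuple L)
  (Hsplit : splittingFieldFor 1%VS (map_poly (in_alg L) ('X^6 + a *: 'X^3 + b%:P)) E)
  (Hroots : roots_of ('X^6 + a *: 'X^3 + b%:P) rs)
  (dns : forall r : rat, r ^+ 2 != a ^+ 2 - 4 * b) (b0 : b != 0)
  (Pq6 : Pq (galPerm E rs)) : a ^+ 2 - 4 * b < 0.
Proof.
set d := a ^+ 2 - 4 * b.
have inE' x : x \in rs -> x \in E by case/tnthP => i ->; apply: (rs_inE Hsplit Hroots).
have rt x : x \in rs -> x ^+ 6 + a%:A * x ^+ 3 + b%:A = 0.
  by rewrite -(root_pL Hroots) => /rootP; rewrite ev.
set g := tnth rs 0.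
have hg := rt g (mem_tnth _ _).
have g0 : g != 0.
  apply: contra b0 => /eqP g0; move: hg; rewrite g0 !expr0n /= mulr0 !add0r.
  by move/eqP; rewrite -(rmorph0 (in_alg L)) => /eqP/inalg_inj ->.
have [δ δin hδ] : exists2 δ, δ \in rs & root (('X + g%:P) * 'X + (g ^+ 2)%:P) δ.
  apply: dvd_root; last first.
    have nz : 'X + g%:P != 0 by rewrite -size_poly_eq0 size_XaddC.
    rewrite size_polyDl size_mulX ?size_XaddC //.
    exact: (leq_ltn_trans (size_polyC_leq1 _)).
  rewrite -(proj2 Hroots).
  have -> : map_poly (in_alg L) ('X^6 + a *: 'X^3 + b%:P) =
     (('X + g%:P) * 'X + (g ^+ 2)%:P) * (('X - g%:P) * ('X^3 + (a%:A)%:P + g%:P ^+ 3)).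
    have hb : (b%:A : L)%:P = - (g%:P ^+ 6 + (a%:A)%:P * g%:P ^+ 3).
      by rewrite -!rmorphXn -rmorphM -rmorphD -rmorphN; congr (_%:P); rewrite -(subr0 (b%:A)) -hg; ring.
    rewrite !rmorphD /= map_polyZ !map_polyXn map_polyC /= hb -mul_polyC rmorphXn.
    ring.
  exact: dvdp_mulIl.
have hδ' : (δ + g) * δ + g ^+ 2 = 0 by move/rootP: hδ; rewrite !hornerE.
pose w := (2 * δ + g) / g.
have hw : w ^+ 2 = (-3 : rat)%:A.
  rewrite -[_%:A]/(in_alg L _) rmorphN rmorph_nat /w.
  have key : (2 * δ + g) ^+ 2 = - 3%:R * g ^+ 2 + 4 * ((δ + g) * δ + g ^+ 2) by ring.
  rewrite hδ' mulr0 addr0 in key.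
  by rewrite expr_div_n key; field.
have wE : w \in E by rewrite /w rpred_div ?rpredD ?rpredM ?rpred_nat ?inE' ?mem_tnth.
pose v := 2 * g ^+ 3 + a%:A.
have hv : v ^+ 2 = d%:A.
  have hd : (d%:A : L) = (a%:A) ^+ 2 - 4 * b%:A.
    change (in_alg L d = in_alg L a ^+ 2 - 4 * in_alg L b); by rewrite rmorphB !rmorphM rmorph_nat expr2.
  have hb : (b%:A : L) = - (g ^+ 6 + a%:A * g ^+ 3) by rewrite -(subr0 (b%:A)) -hg; ring.
  rewrite hd hb /v; ring.
have vE : v \in E.
  rewrite /v rpredD //; first by rewrite rpredM ?rpredX ?rpred_nat ?inE' ?mem_tnth.
  by rewrite memvZ // mem1v.
have w1 : w \notin 1%VS.
  apply/negP => /mem1P [r hr]; move: hw; rewrite hr inalgX => /inalg_inj hr2.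
  by have := sqr_ge0 r; rewrite hr2; lra.
have v1 : v \notin 1%VS.
  apply/negP => /mem1P [r hr]; move: hv; rewrite hr inalgX => /inalg_inj hr2.
  by move: (dns r); rewrite hr2 eqxx.
have := quad_uniq Hsplit Hroots Pq6 wE vE hw hv w1 v1.
case/mem1P => t ht.
have ht2 : t ^+ 2 = -3 * d.
  by apply: (@inalg_inj L); rewrite -inalgX -ht exprMn hw hv inalgM.
have d0 : d != 0 by apply/eqP => h; move: (dns 0); rewrite -/d h expr2 mulr0 eqxx.
have := sqr_ge0 t; rewrite ht2 => ht0.
rewrite Order.POrderTheory.lt_neqAle d0 /=; lra.
Qed.

Lemma part4 (a b : rat) (L : splittingFieldType rat) (E : {subfield L}) (rs : 4.-tuple L)
  (Hsplit : splittingFieldFor 1%VS (map_poly (in_alg L) ('X^4 + a *: 'X^2 + b%:P)) E)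
  (Hroots : roots_of ('X^4 + a *: 'X^2 + b%:P) rs)
  (dns : forall r : rat, r ^+ 2 != a ^+ 2 - 4 * b) (dneg : a ^+ 2 - 4 * b < 0)
  (Pq4 : Pq (galPerm E rs))
  (ne2 : exists2 g, g \in galPerm E rs & (g * g)%g != 1%g) : False.
Proof.
set d := a ^+ 2 - 4 * b.
have bpos : 0 < b by have := sqr_ge0 a; rewrite /d in dneg; lra.
have inE' x : x \in rs -> x \in E by case/tnthP => i ->; apply: (rs_inE Hsplit Hroots).
have rt x : x \in rs -> x ^+ 4 + a%:A * x ^+ 2 + b%:A = 0.
  by rewrite -(root_pL Hroots) => /rootP; rewrite ev.
have nz0 x : x \in rs -> x != 0.
  move=> xr; apply/eqP => x0; move: (rt x xr); rewrite x0 !expr0n /= mulr0 !add0r.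
  by move/eqP; rewrite -(rmorph0 (in_alg L)) => /eqP/inalg_inj b0; rewrite b0 in bpos.
set g := tnth rs 0.
have hg := rt g (mem_tnth _ _).
have [g' g'in hg'] : exists2 g', g' \in rs & root ('X * 'X + (a%:A + g ^+ 2)%:P) g'.
  apply: dvd_root; last first.
    rewrite size_polyDl size_mulX ?size_polyX ?polyX_eq0 //.
    exact: (leq_ltn_trans (size_polyC_leq1 _)).
  rewrite -(proj2 Hroots).
  have -> : map_poly (in_alg L) ('X^4 + a *: 'X^2 + b%:P) =
     ('X * 'X + (a%:A + g ^+ 2)%:P) * (('X - g%:P) * ('X + g%:P)).
    have hb : (b%:A : L)%:P = - (g%:P ^+ 4 + (a%:A)%:P * g%:P ^+ 2).
      by rewrite -!rmorphXn -rmorphM -rmorphD -rmorphN; congr (_%:P); rewrite -(subr0 (b%:A)) -hg; ring.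
    rewrite !rmorphD /= map_polyZ !map_polyXn map_polyC /= hb -mul_polyC rmorphXn.
    ring.
  exact: dvdp_mulIl.
have hg'' : g' * g' + (a%:A + g ^+ 2) = 0 by move/rootP: hg'; rewrite !hornerE.
pose v := 2 * g ^+ 2 + a%:A.
have hb : (b%:A : L) = - (g ^+ 4 + a%:A * g ^+ 2) by rewrite -(subr0 (b%:A)) -hg; ring.
have hv : v ^+ 2 = d%:A.
  have hd : (d%:A : L) = (a%:A) ^+ 2 - 4 * b%:A.
    by change (in_alg L d = in_alg L a ^+ 2 - 4 * in_alg L b); rewrite rmorphB !rmorphM rmorph_nat expr2.
  rewrite hd hb /v; ring.
have vE : v \in E.
  rewrite /v rpredD //; first by rewrite rpredM ?rpredX ?rpred_nat ?inE' ?mem_tnth.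
  by rewrite memvZ // mem1v.
have v1 : v \notin 1%VS.
  apply/negP => /mem1P [r hr]; move: hv; rewrite hr inalgX => /inalg_inj hr2.
  by move: (dns r); rewrite hr2 eqxx.
pose z := g * g'.
have hz : z ^+ 2 = b%:A.
  have hg2 : g' * g' = - (a%:A + g ^+ 2) by rewrite -(subr0 (g' * g')) -hg''; ring.
  have -> : z ^+ 2 = g ^+ 2 * (g' * g') by rewrite /z; ring.
  by rewrite hg2 hb; ring.
have zE : z \in E by rewrite rpredM ?inE' ?mem_tnth.
case: (boolP (z \in 1%VS)) => [/mem1P [c hc] | z1]; last first.
  have := quad_uniq Hsplit Hroots Pq4 vE zE hv hz v1 z1.
  case/mem1P => t ht.
  have ht2 : t ^+ 2 = d * b.
    by apply: (@inalg_inj L); rewrite -inalgX -ht exprMn hv hz inalgM.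
  have := sqr_ge0 t; rewrite ht2 => ht0.
  rewrite /d in dneg ht0; nra.
have hcb : (c%:A : L) ^+ 2 = b%:A by rewrite -hc.
have [s [sG [i hi]]] := nonexp2 Hroots ne2.
set r := tnth rs i in hi.
set t := s r in hi.
have rin : r \in rs by apply: mem_tnth.
have tin : t \in rs by apply: (gal_root Hroots sG rin).
have hr := rt r rin; have ht := rt t tin.
have r0 := nz0 r rin; have t0 := nz0 t tin.
move/eqP: hi; apply.
case: (eqVneq (t ^+ 2) (r ^+ 2)) => e.
  have : (t - r) * (t + r) = 0 by rewrite -subr_sqr e subrr.
  move/eqP; rewrite mulf_eq0 subr_eq0 addr_eq0 => /orP[/eqP e1|/eqP e1].
    by rewrite {1}e1 -/t e1.
  by rewrite {1}e1 galN -/t e1 opprK.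
have hsum : t ^+ 2 + r ^+ 2 + a%:A = 0.
  have : (t ^+ 2 - r ^+ 2) * (t ^+ 2 + r ^+ 2 + a%:A) = 0.
    have -> : (t ^+ 2 - r ^+ 2) * (t ^+ 2 + r ^+ 2 + a%:A) =
       (t ^+ 4 + a%:A * t ^+ 2 + b%:A) - (r ^+ 4 + a%:A * r ^+ 2 + b%:A) by ring.
    by rewrite ht hr subrr.
  by move/eqP; rewrite mulf_eq0 subr_eq0 (negbTE e) => /eqP.
have hrt : (r * t) ^+ 2 = (c%:A) ^+ 2.
  rewrite hcb exprMn.
  have -> : (b%:A : L) = - (r ^+ 4 + a%:A * r ^+ 2) by rewrite -(subr0 (b%:A)) -hr; ring.
  have -> : t ^+ 2 = - (r ^+ 2 + a%:A) by rewrite -(subr0 (t ^+ 2)) -hsum; ring.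
  ring.
have hs : t * s t = t * r.
  rewrite mulrC -galMul.
  have : (r * t - c%:A) * (r * t + c%:A) = 0 by rewrite -subr_sqr hrt subrr.
  move/eqP; rewrite mulf_eq0 subr_eq0 addr_eq0 => /orP[/eqP e1|/eqP e1].
    by rewrite (mulrC t) e1 galc.
  by rewrite (mulrC t) e1 galN galc.
exact: (mulfI t0 hs).
Qed.

Unset Implicit Arguments.

Theorem lemma3p4 (a b : rat)
  (Hirr : irreducible_poly ('X^12 + a *: 'X^6 + b%:P : {poly rat}))
  (L4 : splittingFieldType rat) (E4 : {subfield L4}) (rs4 : 4.-tuple L4)
  (Hsplit4 : splittingFieldFor 1%VS
               (map_poly (in_alg L4) ('X^4 + a *: 'X^2 + b%:P)) E4)
  (Hroots4 : roots_of ('X^4 + a *: 'X^2 + b%:P) rs4)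
  (L6 : splittingFieldType rat) (E6 : {subfield L6}) (rs6 : 6.-tuple L6)
  (Hsplit6 : splittingFieldFor 1%VS
               (map_poly (in_alg L6) ('X^6 + a *: 'X^3 + b%:P)) E6)
  (Hroots6 : roots_of ('X^6 + a *: 'X^3 + b%:P) rs6) :
  ~ (conjS (galPerm E4 rs4) T4_1 /\
     (conjS (galPerm E6 rs6) T6_1 \/ conjS (galPerm E6 rs6) T6_2 \/
      conjS (galPerm E6 rs6) T6_5)).
Proof.
case=> hc4 hc6.
have dns := d_nonsq Hirr.
have b0 : b != 0 by apply/eqP => b0; move: (dns a); rewrite b0 mulr0 subr0 eqxx.
have Pq6 : Pq (galPerm E6 rs6).
  case: hc6 => [|[|]] [x hx]; apply: (Pq_conj (x := x)); rewrite hx;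
    [exact: Pq61 | exact: Pq62 | exact: Pq65].
have dneg := part6 Hsplit6 Hroots6 dns b0 Pq6.
have Pq4 : Pq (galPerm E4 rs4).
  by case: hc4 => x hx; apply: (Pq_conj (x := x)); rewrite hx; exact: Pq41.
have ne2 : exists2 g, g \in galPerm E4 rs4 & (g * g)%g != 1%g.
  case: hc4 => x hx; have [g gT gg] := T41_nonexp2.
  exists (g ^ x^-1)%g; first by rewrite -mem_conjg hx.
  by rewrite -conjMg conjg_eq1.
exact: part4 Hsplit4 Hroots4 dns dneg Pq4 ne2.
Qed.
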